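(* Let $k$ be a positive integer. For any approval-dependent scoring rule $f$ and any instance $\mathcal{I}_{m,\mathcal{A}_n,k}$ in which some item has positive score, $P(\mathcal{I}_{m,\mathcal{A}_n,k},f)\le k$; hence $P(k,f)\le k$. Moreover, this bound is attained for certain approval-dependent scoring rules: in particular, for maximin diverse approval $f_{DA}$ with $\gamma>1$ groups, $P(k,f_{DA})=k$.
   Context: An instance $\mathcal{I}_{m,\mathcal{A}_n,k}=\langle m,\mathcal{A}_n,k\rangle$ consists of items $[m]$, users $[n]$, an approval profile $\mathcal{A}_n=(A_1,\dots,A_n)$ with $A_u\subseteq[m]$, and a target size $k\le m$. A scoring rule assigns each item $i$ a score $f(i,\mathcal{A}_n)\ge0$, additive over sets: $f(S)=\sum_{i\in S}f(i,\mathcal{A}_n)$. The rule is approval-dependent if $f(i,\mathcal{A}_n)=0$ for every item $i\notin\bigcup_{u=1}^nA_u$. Maximin diverse approval: users are partitioned into $\gamma$ nonempty groups $G_1,\dots,G_\gamma$ and $f_{DA}(i,\mathcal{A}_n)=\min_{g\in[\gamma]}\frac{1}{|G_g|}|\{u\in G_g: i\in A_u\}|$. A group $G\subseteq[n]$ is cohesive if $\bigcap_{u\in G}A_u\ne\emptyset$; $S$ represents $G$ if some $u\in G$ has $A_u\cap S\ne\emptyset$; $S$ satisfies justified representation (JR) if $|S|=k$ and $S$ represents every cohesive group of at least $n/k$ users. $S^*$ maximizes $f(S)$ over $|S|=k$; $S^*_{JR}$ maximizes $f(S)$ over sets satisfying JR. The price of JR is $P(\mathcal{I}_{m,\mathcal{A}_n,k},f)=f(S^*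 )/f(S^*_{JR})$ and $P(k,f)=\max_{\mathcal{I}_{m,\mathcal{A}_n,k}}P(\mathcal{I}_{m,\mathcal{A}_n,k},f)$ over all instances with set size $k$ (for $f_{DA}$, instances include the group partition). *)

(* Defs.v *)
From mathcomp Require Import all_boot all_order all_algebra.
Set Implicit Arguments. Unset Strict Implicit. Unset Printing Implicit Defensive.
Import Order.TTheory GRing.Theory Num.Theory.
Local Open Scope ring_scope.

Section Defs.
Variable R : realFieldType.

(* A scoring rule: for every number of items m, users n and approval profile
   A (A u = approval set of user u), a score for each item. *)
Definition scoring_rule := forall (m n : nat), ('I_n -> {set 'I_m}) -> 'I_m -> R.

Definition scoring_nonneg (f : scoring_rule) : Prop :=
  forall m n (A : 'I_n -> {set 'I_m}) (i : 'I_m), 0 <= f m n A i.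

Definition approval_dependent (f : scoring_rule) : Prop :=
  forall m n (A : 'I_n -> {set 'I_m}) (i : 'I_m),
    i \notin \bigcup_(u : 'I_n) A u -> f m n A i = 0.

Variables (m n : nat).

Definition setscore (s : 'I_m -> R) (S : {set 'I_m}) : R := \sum_(i in S) s i.

Definition cohesive (A : 'I_n -> {set 'I_m}) (G : {set 'I_n}) : bool :=
  \bigcap_(u in G) A u != set0.

Definition represents (A : 'I_n -> {set 'I_m}) (S : {set 'I_m}) (G : {set 'I_n}) : bool :=
  [exists u in G, A u :&: S != set0].

(* "at least n/k users" is written n <= k * |G| (equivalent for k > 0). *)
Definition JR (A : 'I_n -> {set 'I_m}) (k : nat) (S : {set 'I_m}) : bool :=
  (#|S| == k) &&
  [forall G : {set 'I_n},
     (cohesive A G && (n <= k * #|G|)%N) ==> represents A S G].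

(* optimum value of the set score over sets satisfying P
   (scores are nonnegative, so 0 is a neutral start) *)
Definition opt (s : 'I_m -> R) (P : pred {set 'I_m}) : R :=
  \big[Num.max/0]_(S : {set 'I_m} | P S) setscore s S.

Definition opt_all (s : 'I_m -> R) (k : nat) : R := opt s (fun S => #|S| == k).
Definition opt_JR (s : 'I_m -> R) (A : 'I_n -> {set 'I_m}) (k : nat) : R :=
  opt s (JR A k).

Definition price (s : 'I_m -> R) (A : 'I_n -> {set 'I_m}) (k : nat) : R :=
  opt_all s k / opt_JR s A k.

End Defs.

(* Maximin diverse approval, for a partition of the users into gamma groups
   given by g : 'I_n -> 'I_gamma (group of each user). *)
Definition partition_nonempty (gamma n : nat) (g : 'I_n -> 'I_gamma) : bool :=
  [forall c : 'I_gamma, exists u : 'I_n, g u == c].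

Definition f_DA (R : realFieldType) (gamma n : nat) (g : 'I_n -> 'I_gamma)
  (m : nat) (A : 'I_n -> {set 'I_m}) (i : 'I_m) : R :=
  \big[Num.min/1]_(c : 'I_gamma)
     (#|[set u | (g u == c) && (i \in A u)]|%:R / #|[set u | g u == c]|%:R).

(* Main.v *)
Require Import Defs.
From mathcomp Require Import all_boot all_order all_algebra.
From mathcomp Require Import zify ring lra.
Import Order.TTheory GRing.Theory Num.Theory.
Local Open Scope ring_scope.
Set Implicit Arguments. Unset Strict Implicit.

Lemma opt_ge (R : realFieldType) m (s : 'I_m -> R) (P : pred {set 'I_m}) S :
  P S -> setscore s S <= opt s P.
Proof. by move=> PS; rewrite /opt (bigD1 S) //= le_max lexx. Qed.

Lemma opt_le (R : realFieldType) m (s : 'I_m -> R) (P : pred {set 'I_m}) B :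
  0 <= B -> (forall S, P S -> setscore s S <= B) -> opt s P <= B.
Proof.
move=> B0 H; rewrite /opt; apply: (big_ind (fun x => x <= B)) => //.
by move=> x y hx hy; rewrite ge_max hx hy.
Qed.

Section Greedy.
Variables (m n : nat) (A : 'I_n -> {set 'I_m}) (k : nat).

Definition unrep (S : {set 'I_m}) := [set u | A u :&: S == set0].
Definition okJR (S : {set 'I_m}) :=
  [forall G : {set 'I_n},
     (cohesive A G && (n <= k * #|G|)%N) ==> represents A S G].

Lemma okJR_mono (S T : {set 'I_m}) : S \subset T -> okJR S -> okJR T.
Proof.
move=> ST /forallP H; apply/forallP => G; apply/implyP => hG.
have /existsP [u /andP [uG hu]] := implyP (H G) hG.
apply/existsP; exists u; rewrite uG /=.
case/set0Pn: hu => x; rewrite inE => /andP [h1 h2].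
by apply/set0Pn; exists x; rewrite inE h1 (subsetP ST _ h2).
Qed.

Lemma step (S : {set 'I_m}) : ~~ okJR S -> exists j : 'I_m, exists G : {set 'I_n},
  (n <= k * #|G|)%N /\ (#|unrep (j |: S)| + #|G| <= #|unrep S|)%N.
Proof.
move=> /forallPn [G]; rewrite negb_imply => /andP [/andP [coh hG] nrep].
move: coh; rewrite /cohesive => /set0Pn [j hj].
exists j, G; split => //.
have GS : G \subset unrep S.
  apply/subsetP => u uG; rewrite inE; apply: contraNT nrep => hu.
  by apply/existsP; exists u; rewrite uG.
have sub : unrep (j |: S) \subset unrep S :\: G.
  apply/subsetP => u; rewrite !inE => /eqP e.
  have hjn : j \notin A u.
    by apply/negP => ja; move/setP: e => /(_ j); rewrite !inE ja eqxx.
  apply/andP; split.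
    by apply: contra hjn => uG; move/bigcapP: hj; apply.
  apply/eqP/setP => x; rewrite !inE; apply/negbTE/negP => /andP [h1 h2].
  by move/setP: e => /(_ x); rewrite !inE h1 h2 orbT.
have := subset_leq_card sub; rewrite cardsD (setIidPr GS).
have := subset_leq_card GS. move=> h3 h4. by rewrite addnC -leq_subRL.
Qed.

Lemma greedy (i0 : 'I_m) : (0 < k)%N -> i0 \in \bigcup_(u : 'I_n) A u ->
  forall t, (t < k)%N -> exists S : {set 'I_m},
   [/\ i0 \in S, (#|S| <= t.+1)%N & okJR S || (k * #|unrep S| + t * n + k <= k * n)%N].
Proof.
move=> k0 /bigcupP [u _ hu]; elim => [|t IH] ht.
  exists [set i0]; rewrite set11 cards1; split => //; apply/orP; right.
  have : unrep [set i0] \subset [set~ u].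
    apply/subsetP => v; rewrite !inE; apply: contraTN => /eqP ->.
    by apply/set0Pn; exists i0; rewrite !inE hu eqxx.
  move/subset_leq_card; rewrite cardsC1 card_ord => h.
  have n0 : (0 < n)%N by case: u {hu} => /= v; lia.
  nia.
have [S [iS cS hS]] := IH (ltnW ht).
case ok : (okJR S).
  by exists S; split => //; [lia | rewrite ok].
move: hS; rewrite ok /= => hS.
have [j [G [hG hc]]] := step (negbT ok).
exists (j |: S); split.
- by rewrite !inE iS orbT.
- rewrite cardsU1; lia.
- apply/orP; right. have := leq_mul (leqnn k) hc. rewrite mulnDr mulSn => hh.
  have h1 : (k * #|unrep (j |: S)| + n <= k * #|unrep S|)%N.
    by apply: leq_trans hh; rewrite leq_add2l.
  apply: leq_trans hS; rewrite addnA !leq_add2r; exact h1.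
Qed.

Lemma pad (S : {set 'I_m}) : (#|S| <= k)%N -> (k <= m)%N ->
  exists T : {set 'I_m}, S \subset T /\ #|T| = k.
Proof.
move=> h1 h2; have [d hd] : exists d, d = (k - #|S|)%N by eexists.
elim: d S hd h1 => [|d IH] S hd h1.
  by exists S; split => //; lia.
have [x xS] : exists x, x \notin S.
  apply/existsP; rewrite -negb_forall; apply/negP => /forallP hall.
  have : [set: 'I_m] \subset S by apply/subsetP => y _; exact: hall.
  by move/subset_leq_card; rewrite cardsT card_ord; lia.
have [T [ST cT]] := IH (x |: S) ltac:(rewrite cardsU1 xS; lia) ltac:(rewrite cardsU1 xS; lia).
exists T; split => //; apply: subset_trans ST; exact: subsetUr.
Qed.

Lemma JR_exists (i0 : 'I_m) : (0 < k)%N -> (k <= m)%N ->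
  i0 \in \bigcup_(u : 'I_n) A u -> exists S, JR A k S /\ i0 \in S.
Proof.
move=> k0 km hi.
have [S [iS cS hS]] := @greedy i0 k0 hi k.-1 ltac:(lia).
have okS : okJR S.
  case/orP: hS => // hS; apply/forallP => G; apply/implyP => /andP [_ hG].
  apply: contraT => nrep.
  have GS : G \subset unrep S.
    apply/subsetP => u uG; rewrite inE; apply: contraNT nrep => hu.
    by apply/existsP; exists u; rewrite uG.
  have h2 : (n <= k * #|unrep S|)%N.
    by apply: (leq_trans hG); rewrite leq_mul2l subset_leq_card ?orbT.
  have e : (k * n = n + k.-1 * n)%N by rewrite -mulSn prednK.
  rewrite e in hS.
  move: h2 hS; set u := (_ * #|unrep S|)%N; set w := (k.-1 * n)%N; lia.
have [T [ST cT]] := pad (S := S) ltac:(lia) km.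
exists T; split; last exact: subsetP ST _ iS.
by rewrite /JR cT eqxx /=; apply: okJR_mono ST okS.
Qed.
End Greedy.
Lemma setscore_ge (R : realFieldType) m (s : 'I_m -> R) (S : {set 'I_m}) i :
  (forall j, 0 <= s j) -> i \in S -> s i <= setscore s S.
Proof.
move=> s0 iS; rewrite /setscore (bigD1 i) //= lerDl; exact: sumr_ge0.
Qed.

Lemma setscore_le (R : realFieldType) m (s : 'I_m -> R) (S : {set 'I_m}) c :
  (forall j, s j <= c) -> setscore s S <= #|S|%:R * c.
Proof.
move=> h; rewrite /setscore (@le_trans _ _ (\sum_(i in S) c)) //.
  by apply: ler_sum => i _.
by rewrite sumr_const mulr_natl.
Qed.

Lemma price_bound (R : realFieldType) m n (A : 'I_n -> {set 'I_m}) k (s : 'I_m -> R) :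
  (0 < k)%N -> (k <= m)%N -> (forall i, 0 <= s i) ->
  (forall i, i \notin \bigcup_(u : 'I_n) A u -> s i = 0) ->
  (exists i, 0 < s i) -> 0 < opt_JR s A k /\ price s A k <= k%:R.
Proof.
move=> k0 km s0 sA [i0 hi0].
set i1 := [arg max_(i > i0) s i]%O.
have hmax : forall j, s j <= s i1.
  by rewrite /i1; case: arg_maxP => // i _ h j; apply: h.
have pos1 : 0 < s i1 by apply: lt_le_trans hi0 (hmax i0).
have app1 : i1 \in \bigcup_(u : 'I_n) A u.
  by apply: contraTT pos1 => /sA ->; rewrite ltxx.
have [S [JS iS]] := JR_exists k0 km app1.
have hJR : s i1 <= opt_JR s A k.
  by apply: le_trans (setscore_ge s0 iS) _; apply: opt_ge.
have hall : opt_all s k <= k%:R * s i1.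
  apply: opt_le; first by rewrite mulr_ge0 // ltW.
  by move=> T /eqP <-; apply: setscore_le.
have pJ : 0 < opt_JR s A k by apply: lt_le_trans hJR.
split => //.
rewrite /price ler_pdivrMr //; apply: le_trans hall _.
by rewrite ler_wpM2l.
Qed.
Lemma fDA_ge0 (R : realFieldType) gamma n (g : 'I_n -> 'I_gamma) m (A : 'I_n -> {set 'I_m}) i :
  0 <= f_DA R g A i.
Proof.
rewrite /f_DA; apply: (big_ind (fun x : R => 0 <= x)) => //.
  by move=> x y hx hy; rewrite le_min hx hy.
by move=> c _; apply: divr_ge0.
Qed.

Lemma fDA_gt0 (R : realFieldType) gamma n (g : 'I_n -> 'I_gamma) m (A : 'I_n -> {set 'I_m}) i :
  (forall c, exists u, (g u == c) && (i \in A u)) -> 0 < f_DA R g A i.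
Proof.
move=> h; rewrite /f_DA; apply: (big_ind (fun x : R => 0 < x)) => //.
  by move=> x y hx hy; rewrite lt_min hx hy.
move=> c _; have [u /andP [gu iu]] := h c.
apply: divr_gt0; rewrite ltr0n card_gt0; apply/set0Pn; exists u; rewrite inE ?gu ?iu //.
Qed.

Lemma fDA_le (R : realFieldType) gamma n (g : 'I_n -> 'I_gamma) m (A : 'I_n -> {set 'I_m}) i c :
  f_DA R g A i <= #|[set u | (g u == c) && (i \in A u)]|%:R / #|[set u | g u == c]|%:R.
Proof. by rewrite /f_DA (bigD1 c) //= ge_min lexx. Qed.

Lemma fDA_zero (R : realFieldType) gamma n (g : 'I_n -> 'I_gamma) m (A : 'I_n -> {set 'I_m}) i c :
  (forall u, g u == c -> i \notin A u) -> f_DA R g A i = 0.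
Proof.
move=> h; apply/eqP; rewrite eq_le fDA_ge0 andbT.
apply: le_trans (@fDA_le _ _ _ g _ A i c) _.
have -> : [set u | (g u == c) && (i \in A u)] = set0.
  apply/setP => u; rewrite !inE; apply/negbTE/negP => /andP [gu iu].
  by move: (h u gu); rewrite iu.
by rewrite cards0 mul0r.
Qed.
Section Constr.
Variables (R : realFieldType) (k' gam' : nat).
Local Notation k := k'.+1.
Local Notation gam := gam'.+2.
Definition Tu := ('I_k * 'I_gam)%type.
Definition nU := #|{: Tu}|.
Definition blk (u : 'I_nU) : 'I_k := (enum_val u).1.
Definition pos (u : 'I_nU) : 'I_gam := (enum_val u).2.
Definition c0 : 'I_gam := ord0.
Definition c1 : 'I_gam := Ordinal (isT : (1 < gam)%N).
Definition gU (u : 'I_nU) : 'I_gam := if blk u == ord0 then pos u else c0.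
Definition mI := (k + k')%N.
Definition AU (u : 'I_nU) : {set 'I_mI} :=
  if blk u == ord0 then [set i : 'I_mI | (i < k)%N]
  else [set i : 'I_mI | val i == (k + blk u).-1].
Definition uOf (b : 'I_k) (p : 'I_gam) : 'I_nU := enum_rank ((b, p) : Tu).

Lemma uOfK b p : blk (uOf b p) = b /\ pos (uOf b p) = p.
Proof. by rewrite /blk /pos /uOf enum_rankK. Qed.

Lemma nU_eq : nU = (k * gam)%N.
Proof. by rewrite /nU /Tu card_prod !card_ord. Qed.

Lemma memA u (i : 'I_mI) : (i \in AU u) =
  if blk u == ord0 then (i < k)%N else (val i == (k + blk u).-1).
Proof. by rewrite /AU; case: ifP; rewrite inE. Qed.

Lemma memA_Y u (i : 'I_mI) : (i < k)%N -> (i \in AU u) = (blk u == ord0).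
Proof.
move=> hi; rewrite memA; case: ifP => // /negbT hb.
apply/negbTE; have : (0 < blk u)%N by case: (blk u) hb => [[|b] hb].
by move=> hb0; apply/eqP => /= e; lia.
Qed.

Lemma memA_X u (i : 'I_mI) : (k <= i)%N -> i \in AU u -> blk u != ord0.
Proof. by move=> hi; rewrite memA; case: ifP => // _; lia. Qed.

Definition sc := f_DA R gU AU.
Definition y0 : 'I_mI := Ordinal (ltn0Sn (k' + k')) .

Definition cst := sc y0.

Lemma sc_Y (i : 'I_mI) : (i < k)%N -> sc i = cst.
Proof.
move=> hi; rewrite /cst /sc /f_DA; apply: eq_bigr => c _.
congr (_ / _); congr (_%:R); apply: eq_card => u.
by rewrite !inE (memA_Y _ hi) (memA_Y u (isT : (val y0 < k)%N)).
Qed.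

Lemma sc_X (i : 'I_mI) : (k <= i)%N -> sc i = 0.
Proof.
move=> hi; apply: (@fDA_zero _ _ _ _ _ _ _ c1) => u.
rewrite /gU; case: ifP => hb.
  by move=> _; rewrite memA hb -leqNgt.
by [].
Qed.

Lemma cst_gt0 : 0 < cst.
Proof.
apply: fDA_gt0 => c; exists (uOf ord0 c).
have [h1 h2] := uOfK ord0 c.
by rewrite /gU h1 eqxx h2 eqxx /= memA_Y // h1.
Qed.

Lemma pn : partition_nonempty gU.
Proof.
apply/forallP => c; apply/existsP; exists (uOf ord0 c).
by have [h1 h2] := uOfK ord0 c; rewrite /gU h1 eqxx h2.
Qed.

Definition Ys := [set i : 'I_mI | (i < k)%N].
Definition Xs := [set i : 'I_mI | (k <= i)%N].

Lemma cardY : #|Ys| = k.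
Proof.
have -> : Ys = [set lshift k' j | j : 'I_k].
  apply/setP => i; rewrite inE; apply/idP/imsetP.
    by move=> hi; exists (Ordinal hi) => //; apply: val_inj.
  by case=> j _ ->; rewrite /= ltn_ord.
by rewrite card_imset ?card_ord //; apply: lshift_inj.
Qed.

Lemma cardX : #|Xs| = k'.
Proof.
have -> : Xs = ~: Ys by apply/setP => i; rewrite !inE leqNgt.
by rewrite cardsCs setCK cardY card_ord /mI; lia.
Qed.

Lemma opt_all_eq : opt_all sc k = k%:R * cst.
Proof.
apply/eqP; rewrite eq_le; apply/andP; split.
  apply: opt_le; first by rewrite mulr_ge0 // ltW // cst_gt0.
  move=> T /eqP <-; apply: setscore_le => j.
  case: (ltnP j k) => hj; first by rewrite sc_Y.
  by rewrite sc_X // ltW // cst_gt0.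
have -> : k%:R * cst = setscore sc Ys.
  rewrite /setscore (eq_bigr (fun _ => cst)); last by move=> i; rewrite inE => /sc_Y.
  by rewrite sumr_const cardY mulr_natl.
by apply: opt_ge; rewrite /= cardY.
Qed.

Lemma nU_gt0 : (0 < nU)%N.
Proof. exact: (leq_ltn_trans (leq0n _) (ltn_ord (uOf ord0 c0))). Qed.

Lemma S0_JR : JR AU k (y0 |: Xs).
Proof.
rewrite /JR cardsU1 cardX inE /= eqxx /=.
apply/forallP => G; apply/implyP => /andP [_ hG].
have : (0 < #|G|)%N.
  rewrite lt0n; apply/negP => /eqP e; move: hG; rewrite e muln0.
  by have := nU_gt0; lia.
rewrite card_gt0 => /set0Pn [u uG].
apply/existsP; exists u; rewrite uG /=; apply/set0Pn.
case hb: (blk u == ord0).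
  by exists y0; rewrite !inE eqxx memA_Y // hb.
have hb0 : (0 < blk u)%N by case: (blk u) hb => [[|b] hb'].
have hz : ((k + blk u).-1 < mI)%N by rewrite /mI; have := ltn_ord (blk u); lia.
exists (Ordinal hz); rewrite !inE memA hb /= eqxx /=; apply/orP; right; by rewrite -[X in (X < _)%N]addn0 ltn_add2l.
Qed.

Lemma X_sub (T : {set 'I_mI}) : JR AU k T -> Xs \subset T.
Proof.
move=> /andP [_ /forallP hT]; apply/subsetP => x; rewrite inE => hx.
have hm : (x < k + k')%N := ltn_ord x.
have hb : ((x - k).+1 < k)%N by lia.
pose b : 'I_k := Ordinal hb.
pose G := [set uOf b p | p : 'I_gam].
have memG : forall u, u \in G -> forall i : 'I_mI, (i \in AU u) = (i == x).
  move=> u /imsetP [p _ ->] i; have [h1 _] := uOfK b p.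
  rewrite memA h1 /=; have -> : (k' + (x - k).+1 = x)%N by lia.
  by [].
have cG : #|G| = gam.
  rewrite card_imset ?card_ord // => p1 q1 /enum_rank_inj [].
  done.
have coh : cohesive AU G.
  apply/set0Pn; exists x; apply/bigcapP => u uG; by rewrite (memG u uG).
have := implyP (hT G); rewrite coh cG -nU_eq leqnn => /(_ isT).
case/existsP => u /andP [uG /set0Pn [z]]; rewrite inE (memG u uG) => /andP [/eqP -> //].
Qed.

Lemma opt_JR_eq : opt_JR sc AU k = cst.
Proof.
apply/eqP; rewrite eq_le; apply/andP; split.
  apply: opt_le; first by rewrite ltW // cst_gt0.
  move=> T JT; have XT := X_sub JT.
  move: JT => /andP [/eqP cT _].
  rewrite /setscore (big_setID Xs) /= big1 ?add0r; last first.
    by move=> i; rewrite !inE => /andP [_ ?]; rewrite sc_X.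
  apply: le_trans (@setscore_le _ _ sc (T :\: Xs) cst _) _.
    move=> j; case: (ltnP j k) => hj; first by rewrite sc_Y.
    by rewrite sc_X // ltW // cst_gt0.
  by rewrite cardsD (setIidPr XT) cT cardX subSnn mul1r.
apply: le_trans (@opt_ge _ _ sc _ _ S0_JR).
apply: setscore_ge; last by rewrite !inE eqxx.
by move=> j; apply: fDA_ge0.
Qed.

Lemma price_eq : price sc AU k = k%:R.
Proof.
rewrite /price opt_all_eq opt_JR_eq mulfK //; exact: lt0r_neq0 cst_gt0.
Qed.
End Constr.

Unset Implicit Arguments.

Theorem theorem1 (R : realFieldType) (k : nat) (hk : (0 < k)%N) :
  (* P(I, f) <= k for every approval-dependent scoring rule and instance
     with some positively scored item (the denominator is positive) *)
  (forall f : scoring_rule R, scoring_nonneg f -> approval_dependent f ->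
     forall (m n : nat) (A : 'I_n -> {set 'I_m}), (k <= m)%N ->
       (exists i : 'I_m, 0 < f m n A i) ->
       0 < opt_JR (f m n A) A k /\ price (f m n A) A k <= k%:R)
  /\
  (* maximin diverse approval with gamma > 1 groups: P(k, f_DA) = k *)
  (forall gamma : nat, (1 < gamma)%N ->
     (* f_DA is approval-dependent *)
     (forall (n : nat) (g : 'I_n -> 'I_gamma), partition_nonempty g ->
        forall (m : nat) (A : 'I_n -> {set 'I_m}) (i : 'I_m),
          i \notin \bigcup_(u : 'I_n) A u -> f_DA R g A i = 0)
     /\
     (forall (n : nat) (g : 'I_n -> 'I_gamma), partition_nonempty g ->
        forall (m : nat) (A : 'I_n -> {set 'I_m}), (k <= m)%N ->
          (exists i : 'I_m, 0 < f_DA R g A i) ->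
          0 < opt_JR (f_DA R g A) A k /\ price (f_DA R g A) A k <= k%:R)
     /\
     (exists (n : nat) (g : 'I_n -> 'I_gamma) (m : nat) (A : 'I_n -> {set 'I_m}),
        [/\ partition_nonempty g, (k <= m)%N,
            (exists i : 'I_m, 0 < f_DA R g A i) &
            price (f_DA R g A) A k = k%:R])).
Proof.
split.
  move=> f f0 fA m n A km hpos; apply: price_bound => //.
  move=> i; exact: (fA m n A i).
move=> gamma hg.
have appr : forall (n : nat) (g : 'I_n -> 'I_gamma) (m : nat)
    (A : 'I_n -> {set 'I_m}) (i : 'I_m),
    i \notin \bigcup_(u : 'I_n) A u -> f_DA R g A i = 0.
  move=> n g m A i hi; apply: (@fDA_zero _ _ _ _ _ _ _ (Ordinal (ltnW hg))).
  move=> u _; apply: contra hi => iu; apply/bigcupP; by exists u.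
split; first by move=> n g _; apply: appr.
split.
  move=> n g _ m A km hpos; apply: price_bound => //;
  move=> i; first [exact: fDA_ge0 | exact: appr].
case: k hk => // k' _; case: gamma hg appr => [|[|gam']] // _ _.
exists (nU k' gam'), (@gU k' gam'), (mI k'), (@AU k' gam'); split.
- exact: pn.
- exact: leq_addr.
- by exists (y0 k'); apply: cst_gt0.
- exact: price_eq.
Qed.
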